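(* In the $(3,2,2)$ scenario, every deterministically consistent correlation satisfies $p_{\rm gynin}\le \tfrac58$, and the bound is attained by the deterministic correlation $x_1=(1\oplus a_2)a_3$, $x_2=(1\oplus a_3)a_1$, $x_3=(1\oplus a_1)a_2$, which is deterministically consistent.
   Context: $(3,2,2)$ scenario: three parties, $a_k,x_k\in\{0,1\}$, $\bar a=1\oplus a$. For a correlation $p(\vec x|\vec a)$ define $p_{\rm gynin}=\frac18\sum_{\vec a\in\{0,1\}^3}\big[p((a_3,a_1,a_2)|\vec a)+p((\bar a_3,\bar a_1,\bar a_2)|\vec a)\big]$. For finite sets $I_k,O_k$, $p(\vec i|\vec o)$ is a classical process if for all finite setting/outcome sets and all local interventions $p(x_k,o_k|a_k,i_k)$, $\sum_{\vec i,\vec o}\prod_kp(x_k,o_k|a_k,i_k)p(\vec i|\vec o)$ is a valid conditional distribution over $\vec x$ for each $\vec a$. A process function is $\omega:\vec O\to\vec I$ with $\delta_{\vec i,\omega(\vec o)}$ a classical process (equivalently, for every $h=(h_k:I_k\to O_k)$, $\omega\circ h$ has a unique fixed point). A correlation is deterministically consistent if $p(\vec x|\vec a)=\sum_{\vec i,\vec o}\prod_kp(x_k,o_k|a_k,i_k)p(\vec i|\vec o)$ for some finite $I_k,O_k$, local interventions, and $p(\vec i|\vec o)$ a convex combination of process functions $\delta_{\vec i,\omega(\vec o)}$. *)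

(* Defs.v *)
From HB Require Import structures.
From mathcomp Require Import all_boot all_order all_algebra.
From mathcomp Require Import reals.
Set Implicit Arguments. Unset Strict Implicit. Unset Printing Implicit Defensive.
Import Order.TTheory GRing.Theory Num.Theory.
Local Open Scope ring_scope.

Notation bit3 := (bool * bool * bool)%type.

(* A correlation in the (3,2,2) scenario is p : bit3 -> bit3 -> R with
   p x a = p(x | a), x = (x1,x2,x3) outcomes, a = (a1,a2,a3) settings. *)

Definition p_gynin (R : realType) (p : bit3 -> bit3 -> R) : R :=
  8%:R^-1 * \sum_(a : bit3)
     (p (a.2, a.1.1, a.1.2) a + p (~~ a.2, ~~ a.1.1, ~~ a.1.2) a).

(* A local intervention p(x_k, o_k | a_k, i_k), written q a i x o,
   with binary setting a and binary outcome x. *)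
Definition local_intervention (R : realType) (I O : finType)
    (q : bool -> I -> bool -> O -> R) : Prop :=
  (forall a i x o, 0 <= q a i x o) /\
  (forall a i, \sum_(x : bool) \sum_(o : O) q a i x o = 1).

Definition process_function (I1 I2 I3 O1 O2 O3 : finType)
    (w : O1 * O2 * O3 -> I1 * I2 * I3) : Prop :=
  forall (h1 : I1 -> O1) (h2 : I2 -> O2) (h3 : I3 -> O3),
    exists! i : I1 * I2 * I3, w (h1 i.1.1, h2 i.1.2, h3 i.2) = i.

(* Deterministic consistency: p arises from some finite I_k, O_k, local
   interventions, and a process p(i|o) = sum_j lam_j [i = w_j(o)] that is a
   convex combination of (finitely many) process functions w_j. *)
Definition det_consistent (R : realType) (p : bit3 -> bit3 -> R) : Prop :=
  exists (I1 I2 I3 O1 O2 O3 : finType)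
    (q1 : bool -> I1 -> bool -> O1 -> R)
    (q2 : bool -> I2 -> bool -> O2 -> R)
    (q3 : bool -> I3 -> bool -> O3 -> R)
    (n : nat) (lam : 'I_n -> R) (w : 'I_n -> O1 * O2 * O3 -> I1 * I2 * I3),
    [/\ local_intervention q1 /\ local_intervention q2 /\ local_intervention q3,
        (forall j, 0 <= lam j) /\ \sum_(j < n) lam j = 1,
        (forall j, process_function (w j)) &
        forall x a : bit3,
          p x a = \sum_(i : I1 * I2 * I3) \sum_(o : O1 * O2 * O3)
                    q1 a.1.1 i.1.1 x.1.1 o.1.1 * q2 a.1.2 i.1.2 x.1.2 o.1.2
                    * q3 a.2 i.2 x.2 o.2
                    * \sum_(j < n) lam j * (i == w j o)%:R].

Definition p_det (R : realType) (f : bit3 -> bit3) : bit3 -> bit3 -> R :=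
  fun x a => (x == f a)%:R.

Definition gynin_strategy (a : bit3) : bit3 :=
  (~~ a.1.2 && a.2, ~~ a.2 && a.1.1, ~~ a.1.1 && a.1.2).

(* Main.v *)
Require Import Defs.
From HB Require Import structures.
From mathcomp Require Import all_boot all_order all_algebra.
From mathcomp Require Import reals.
From mathcomp Require Import ring.
From Stdlib Require Import FunctionalExtensionality.
Set Implicit Arguments. Unset Strict Implicit. Unset Printing Implicit Defensive.
Import Order.TTheory GRing.Theory Num.Theory.

Definition b3d : bit3 := (false,false,false).
Definition allb3 : seq bit3 := [:: (false,false,false); (false,false,true); (false,true,false); (false,true,true); (true,false,false); (true,false,true); (true,true,false); (true,true,true)].
Definition sig3 (a : bit3) : bit3 := (a.2, a.1.1, a.1.2).
Definition neg3 (a : bit3) : bit3 := (~~ a.2, ~~ a.1.1, ~~ a.1.2).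
Definition beqb (u v : bool) : bool := if u then v else ~~ v.
Definition beq3 (u v : bit3) : bool :=
  if beqb u.1.1 v.1.1 then (if beqb u.1.2 v.1.2 then beqb u.2 v.2 else false) else false.
Definition winb (a y : bit3) : bool := if beq3 (sig3 a) y then true else beq3 (neg3 a) y.
Definition fc := (bool * bool * bool * bool)%type.
Definition evalf (c : fc) (y0 y1 : bool) : bool :=
  if y0 then (if y1 then c.2 else c.1.2) else (if y1 then c.1.1.2 else c.1.1.1).
Definition condb (c1 c2 c3 : fc) (x : bit3 -> bit3) (a : bit3) : bool :=
 if beqb a.1.1 (evalf c1 (x (false, a.1.2, a.2)).1.1 (x (true, a.1.2, a.2)).1.1) then
 if beqb a.1.2 (evalf c2 (x (a.1.1, false, a.2)).1.2 (x (a.1.1, true, a.2)).1.2) then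
     beqb a.2 (evalf c3 (x (a.1.1, a.1.2, false)).2 (x (a.1.1, a.1.2, true)).2)
 else false else false.
Definition fc_of (n : nat) : fc := (odd n, odd (n %/ 2), odd (n %/ 4), odd (n %/ 8)).
Definition combos : seq (fc*fc*fc) := Eval vm_compute in map (fun t => (fc_of t.1.1, fc_of t.1.2, fc_of t.2))
  [:: (5,3,3);(10,12,12);(9,6,6);(3,10,5);(12,5,10);(6,6,3);(6,10,6);(12,6,9);(3,3,4);(5,10,8);(10,4,10);(2,2,0)].
Fixpoint allif (T : Type) (p : T -> bool) (s : seq T) : bool :=
  if s is y :: s' then (if p y then allif p s' else false) else true.
Fixpoint cnt (T : Type) (p : T -> bool) (s : seq T) : nat :=
  if s is y :: s' then (if p y then (cnt p s').+1 else cnt p s') else 0.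
Definition is1 (n : nat) : bool := if n is 1 then true else false.
Definition P12b (x : bit3 -> bit3) : bool :=
  allif (fun c => is1 (cnt (condb c.1.1 c.1.2 c.2 x) allb3)) combos.
Definition idx (a : bit3) : nat := (if a.1.1 then 4 else 0) + (if a.1.2 then 2 else 0) + (if a.2 then 1 else 0).
Definition x_of (v : seq bit3) (a : bit3) : bit3 := nth b3d v (idx a).
Definition lose (i : nat) (b : bit3) : bool := ~~ winb (nth b3d allb3 i) b.
Fixpoint losses_from (i : nat) (s : seq bit3) : nat :=
  if s is b :: s' then lose i b + losses_from i.+1 s' else 0.
Fixpoint gen (k i : nat) (pre : seq bit3) (l : nat) : bool :=
  if k is k'.+1 then
    allif (fun b => let l' := l + lose i b in
                  if 2 < l' then true else gen k' i.+1 (rcons pre b) l') allb3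
  else if 2 < l then true else ~~ P12b (x_of pre).

Lemma gen_ok : gen 8 0 [::] 0.
Proof. vm_compute. reflexivity. Qed.


Lemma allifP (T : Type) (p : T -> bool) s : allif p s = all p s.
Proof. by elim: s => //= y s ->; case: (p y). Qed.

Lemma cntE (T : Type) (p : T -> bool) s : cnt p s = count p s.
Proof. by elim: s => //= y s ->; case: (p y). Qed.

Lemma losses_cat i s t : losses_from i (s ++ t) = losses_from i s + losses_from (i + size s) t.
Proof.
elim: s i => [|b s IH] i /=; first by rewrite addn0.
by rewrite IH addSnnS addnA.
Qed.

Lemma genS k i pre l : gen k.+1 i pre l =
  all (fun b => let l' := l + lose i b in
                  if 2 < l' then true else gen k i.+1 (rcons pre b) l') allb3.
Proof. by rewrite -allifP. Qed.

Lemma gen_sound k : forall pre l, gen k (size pre) pre l -> l = losses_from 0 pre ->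
  forall suf, size suf = k -> P12b (x_of (pre ++ suf)) -> 2 < losses_from 0 (pre ++ suf).
Proof.
elim: k => [|k IH] pre l Hg Hl suf.
  move/size0nil => -> ; rewrite cats0 -Hl => HP.
  by move: Hg => /=; case: ifP => // _; rewrite HP.
case: suf => [//|b suf] [Hs] HP.
rewrite -cat_rcons in HP *.
move: Hg; rewrite genS => /allP /(_ b).
have Hb : forall c : bit3, c \in allb3 by case=> [[[] []] []].
move=> /(_ (Hb b)).
have E : losses_from 0 (rcons pre b) = l + lose (size pre) b.
  by rewrite -cats1 losses_cat /= add0n addn0 Hl.
move=> /= Hg; move: Hg; case: ifP => H1 Hg.
  by rewrite losses_cat; apply: (leq_trans H1); rewrite -E leq_addr.
apply: (IH (rcons pre b) (l + lose (size pre) b)) => //.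
by rewrite size_rcons.
Qed.

Lemma x_of_map (x : bit3 -> bit3) : x_of (map x allb3) = x.
Proof. by apply: functional_extensionality; case => [[[] []] []]. Qed.

Lemma comb_main (x : bit3 -> bit3) : P12b x -> 2 < losses_from 0 (map x allb3).
Proof.
move=> HP.
have := @gen_sound 8 [::] 0 gen_ok erefl (map x allb3) erefl.
by rewrite /= x_of_map; apply.
Qed.

Lemma wins_losses (x : bit3 -> bit3) :
  count (fun a => winb a (x a)) allb3 + losses_from 0 (map x allb3) = 8.
Proof.
rewrite /= /lose /=.
by do 8 case: (winb _ _).
Qed.

Lemma cnt_unique (p : bit3 -> bool) : (exists! a, p a) -> cnt p allb3 = 1.
Proof.
case=> a [Ha Hu].
have E : forall b, p b = (b == a).
  move=> b; apply/idP/eqP => [Hb|->//].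
  exact: (esym (Hu b Hb)).
rewrite cntE (eq_count E).
by case: a {Ha Hu E} => [[[] []] []].
Qed.

Lemma beqbP u v : reflect (u = v) (beqb u v).
Proof. by case: u; case: v; constructor. Qed.

Lemma comb_final (x : bit3 -> bit3) :
  (forall f1 f2 f3 : bool -> bool -> bool, exists! a : bit3,
  a.1.1 = f1 (x (false,a.1.2,a.2)).1.1 (x (true,a.1.2,a.2)).1.1 /\
  a.1.2 = f2 (x (a.1.1,false,a.2)).1.2 (x (a.1.1,true,a.2)).1.2 /\
  a.2 = f3 (x (a.1.1,a.1.2,false)).2 (x (a.1.1,a.1.2,true)).2) ->
  count (fun a => winb a (x a)) allb3 <= 5.
Proof.
move=> H.
have HP : P12b x.
  rewrite /P12b allifP; apply/allP => [[[c1 c2] c3]] _.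
  change (is1 (cnt (condb c1 c2 c3 x) allb3)).
  rewrite (@cnt_unique (condb c1 c2 c3 x)) //.
  have [a [Ha Hu]] := H (evalf c1) (evalf c2) (evalf c3).
  have K : forall b : bit3, condb c1 c2 c3 x b <->
    (b.1.1 = evalf c1 (x (false,b.1.2,b.2)).1.1 (x (true,b.1.2,b.2)).1.1 /\
     b.1.2 = evalf c2 (x (b.1.1,false,b.2)).1.2 (x (b.1.1,true,b.2)).1.2 /\
     b.2 = evalf c3 (x (b.1.1,b.1.2,false)).2 (x (b.1.1,b.1.2,true)).2).
    move=> b; rewrite /condb.
    case: beqbP => [E1|NE1]; last by split => //; case.
    case: beqbP => [E2|NE2]; last by split => //; case=> _ [].
    by case: beqbP => [E3|NE3]; split => //; case=> _ [].
  exists a; split; first exact/K.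
  by move=> b /K /Hu.
have := comb_main HP; have := wins_losses x.
move=> E L; rewrite -(leq_add2r 3).
apply: (@leq_trans (count (fun a => winb a (x a)) allb3 + losses_from 0 (map x allb3))).
  by rewrite leq_add2l.
by rewrite E.
Qed.

Local Open Scope ring_scope.


Definition Sg (R : realType) (I1 I2 I3 O1 O2 O3 : finType)
  (q1 : bool -> I1 -> bool -> O1 -> R) (q2 : bool -> I2 -> bool -> O2 -> R)
  (q3 : bool -> I3 -> bool -> O3 -> R) (w : O1 * O2 * O3 -> I1 * I2 * I3) (x a : bit3) : R :=
  \sum_(i : I1 * I2 * I3) \sum_(o : O1 * O2 * O3)
     q1 a.1.1 i.1.1 x.1.1 o.1.1 * q2 a.1.2 i.1.2 x.1.2 o.1.2 * q3 a.2 i.2 x.2 o.2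
     * (i == w o)%:R.
Definition Tg (R : realType) (I1 I2 I3 O1 O2 O3 : finType)
  (q1 : bool -> I1 -> bool -> O1 -> R) (q2 : bool -> I2 -> bool -> O2 -> R)
  (q3 : bool -> I3 -> bool -> O3 -> R) (w : O1 * O2 * O3 -> I1 * I2 * I3) : R :=
  \sum_(a : bit3) (Sg q1 q2 q3 w (sig3 a) a + Sg q1 q2 q3 w (neg3 a) a).
Definition dq (R : realType) (I O : finType) (F : {ffun bool * I -> bool * O})
  (a : bool) (i : I) (x : bool) (o : O) : R := (F (a,i) == (x,o))%:R.

Lemma big_bit3 (T : Type) (idx : T) (op : Monoid.com_law idx) (f : bit3 -> T) :
  \big[op/idx]_(a : bit3) f a = \big[op/idx]_(a <- allb3) f a.
Proof.
apply: perm_big; apply: uniq_perm => //; first exact: index_enum_uniq.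
by move=> a; rewrite mem_index_enum; case: a => [[[] []] []].
Qed.

Lemma winR (R : realType) (a y : bit3) :
  (y == sig3 a)%:R + (y == neg3 a)%:R = (winb a y)%:R :> R.
Proof.
rewrite -natrD; congr (_ %:R).
by case: a y => [[[] []] []] [[[] []] []].
Qed.

Section Decomp.
Variables (R : realType) (I O : finType) (q : bool -> I -> bool -> O -> R).
Hypothesis Hq : local_intervention q.

Definition piw (F : {ffun bool * I -> bool * O}) : R :=
  \prod_(t : bool * I) q t.1 t.2 (F t).1 (F t).2.

Lemma Hs t : \sum_(y : bool * O) q t.1 t.2 y.1 y.2 = 1.
Proof. by case: Hq => _ H; rewrite -(H t.1 t.2) pair_bigA. Qed.

Lemma piw_ge0 F : 0 <= piw F.
Proof. by apply: prodr_ge0 => t _; case: Hq => H _; apply: H. Qed.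

Lemma piw_sum : \sum_F piw F = 1.
Proof.
rewrite /piw -(bigA_distr_bigA (fun (t : bool * I) (y : bool * O) => q t.1 t.2 y.1 y.2)).
by apply: big1 => t _; apply: Hs.
Qed.

Lemma decomp a i x o :
  q a i x o = \sum_(F : {ffun bool * I -> bool * O}) piw F * dq R F a i x o.
Proof.
pose G (t : bool * I) (y : bool * O) :=
  if t == (a,i) then q t.1 t.2 y.1 y.2 * (y == (x,o))%:R else q t.1 t.2 y.1 y.2.
have L : \sum_(F : {ffun bool * I -> bool * O}) piw F * dq R F a i x o =
         \sum_(F : {ffun bool * I -> bool * O}) \prod_t G t (F t).
  apply: eq_bigr => F _; rewrite /piw /dq (bigD1 (a,i)) // [RHS](bigD1 (a,i)) //.
  rewrite /G (eqxx (a,i)) mulrAC; congr (_ * _).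
  by apply: eq_bigr => t Ht; rewrite /G (negbTE Ht).
rewrite L -(bigA_distr_bigA G) (bigD1 (a,i)) //=.
rewrite [X in _ * X]big1 ?mulr1; last first.
  by move=> t Ht; rewrite /G (negbTE Ht) Hs.
rewrite /G (eqxx (a,i)) (bigD1 (x,o)) //= eqxx mulr1 big1 /= ?addr0 //.
by move=> y Hy; rewrite (negbTE Hy) mulr0.
Qed.
End Decomp.

Section Det.
Variable R : realType.
Variables (I1 I2 I3 O1 O2 O3 : finType).
Variable w : O1 * O2 * O3 -> I1 * I2 * I3.
Hypothesis Hw : process_function w.
Variables (F1 : {ffun bool * I1 -> bool * O1}) (F2 : {ffun bool * I2 -> bool * O2})
          (F3 : {ffun bool * I3 -> bool * O3}).

Definition hh (a : bit3) (i : I1 * I2 * I3) : O1 * O2 * O3 :=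
  ((F1 (a.1.1, i.1.1)).2, (F2 (a.1.2, i.1.2)).2, (F3 (a.2, i.2)).2).
Definition Xa (a : bit3) (i : I1 * I2 * I3) : bit3 :=
  ((F1 (a.1.1, i.1.1)).1, (F2 (a.1.2, i.1.2)).1, (F3 (a.2, i.2)).1).

Lemma exPF a : exists i, w (hh a i) == i.
Proof.
have [i [Hi _]] := Hw (fun i1 => (F1 (a.1.1, i1)).2) (fun i2 => (F2 (a.1.2, i2)).2)
   (fun i3 => (F3 (a.2, i3)).2).
by exists i; apply/eqP.
Qed.

Definition ist a := xchoose (exPF a).

Lemma istP a : w (hh a (ist a)) = ist a.
Proof. exact/eqP/(xchooseP (exPF a)). Qed.

Lemma ist_uniq a i : w (hh a i) = i -> i = ist a.
Proof.
have [i0 [_ Hu]] := Hw (fun i1 => (F1 (a.1.1, i1)).2) (fun i2 => (F2 (a.1.2, i2)).2)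
   (fun i3 => (F3 (a.2, i3)).2).
move=> Hi; rewrite -(Hu i Hi); exact: (Hu _ (istP a)).
Qed.

Lemma settingsPF (s1 : I1 -> bool) (s2 : I2 -> bool) (s3 : I3 -> bool) :
  exists! a : bit3, a = (s1 (ist a).1.1, s2 (ist a).1.2, s3 (ist a).2).
Proof.
have [i0 [Hi0 Hu]] := Hw (fun i1 => (F1 (s1 i1, i1)).2) (fun i2 => (F2 (s2 i2, i2)).2)
   (fun i3 => (F3 (s3 i3, i3)).2).
have Hfix : forall a, a = (s1 (ist a).1.1, s2 (ist a).1.2, s3 (ist a).2) ->
  w ((F1 (s1 (ist a).1.1, (ist a).1.1)).2, (F2 (s2 (ist a).1.2, (ist a).1.2)).2,
     (F3 (s3 (ist a).2, (ist a).2)).2) = ist a.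
  move=> a Ha.
  have Ha1 : a.1.1 = s1 (ist a).1.1 by rewrite {1}Ha.
  have Ha2 : a.1.2 = s2 (ist a).1.2 by rewrite {1}Ha.
  have Ha3 : a.2 = s3 (ist a).2 by rewrite {1}Ha.
  rewrite -Ha1 -Ha2 -Ha3; exact: istP.
exists (s1 i0.1.1, s2 i0.1.2, s3 i0.2); split.
  have -> : ist (s1 i0.1.1, s2 i0.1.2, s3 i0.2) = i0.
    by apply/esym/ist_uniq.
  by [].
move=> a Ha.
have E1 := Hu _ (Hfix a Ha).
by rewrite Ha -E1.
Qed.

Lemma indep1 a2 a3 : (ist (false,a2,a3)).1.1 = (ist (true,a2,a3)).1.1.
Proof.
apply/eqP/negPn/negP => Hne.
have [[[b c] d] [Ha _]] := settingsPF (fun i => i != (ist (true,a2,a3)).1.1)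
   (fun _ => a2) (fun _ => a3).
case: Ha => Eb Ec Ed; subst c d.
by case: b Eb => /= ; [rewrite eqxx | rewrite Hne].
Qed.

Lemma indep2 a1 a3 : (ist (a1,false,a3)).1.2 = (ist (a1,true,a3)).1.2.
Proof.
apply/eqP/negPn/negP => Hne.
have [[[b c] d] [Ha _]] := settingsPF (fun _ => a1)
   (fun i => i != (ist (a1,true,a3)).1.2) (fun _ => a3).
case: Ha => Eb Ec Ed; subst b d.
by case: c Ec => /= ; [rewrite eqxx | rewrite Hne].
Qed.

Lemma indep3 a1 a2 : (ist (a1,a2,false)).2 = (ist (a1,a2,true)).2.
Proof.
apply/eqP/negPn/negP => Hne.
have [[[b c] d] [Ha _]] := settingsPF (fun _ => a1) (fun _ => a2)
   (fun i => i != (ist (a1,a2,true)).2).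
case: Ha => Eb Ec Ed; subst b c.
by case: d Ed => /= ; [rewrite eqxx | rewrite Hne].
Qed.

Lemma indep1' e b c d : (ist (e,c,d)).1.1 = (ist (b,c,d)).1.1.
Proof. by case: e; case: b; rewrite ?indep1. Qed.
Lemma indep2' e b c d : (ist (b,e,d)).1.2 = (ist (b,c,d)).1.2.
Proof. by case: e; case: c; rewrite ?indep2. Qed.
Lemma indep3' e b c d : (ist (b,c,e)).2 = (ist (b,c,d)).2.
Proof. by case: e; case: d; rewrite ?indep3. Qed.

Definition xt (a : bit3) : bit3 := Xa a (ist a).

Lemma xtP (f1 f2 f3 : bool -> bool -> bool) : exists! a : bit3,
  a.1.1 = f1 (xt (false,a.1.2,a.2)).1.1 (xt (true,a.1.2,a.2)).1.1 /\
  a.1.2 = f2 (xt (a.1.1,false,a.2)).1.2 (xt (a.1.1,true,a.2)).1.2 /\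
  a.2 = f3 (xt (a.1.1,a.1.2,false)).2 (xt (a.1.1,a.1.2,true)).2.
Proof.
have [a [Ha Hu]] := settingsPF (fun i => f1 (F1 (false,i)).1 (F1 (true,i)).1)
  (fun i => f2 (F2 (false,i)).1 (F2 (true,i)).1) (fun i => f3 (F3 (false,i)).1 (F3 (true,i)).1).
have K : forall a : bit3,
  (a.1.1 = f1 (xt (false,a.1.2,a.2)).1.1 (xt (true,a.1.2,a.2)).1.1 /\
  a.1.2 = f2 (xt (a.1.1,false,a.2)).1.2 (xt (a.1.1,true,a.2)).1.2 /\
  a.2 = f3 (xt (a.1.1,a.1.2,false)).2 (xt (a.1.1,a.1.2,true)).2) <->
  a = (f1 (F1 (false,(ist a).1.1)).1 (F1 (true,(ist a).1.1)).1,
       f2 (F2 (false,(ist a).1.2)).1 (F2 (true,(ist a).1.2)).1,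
       f3 (F3 (false,(ist a).2)).1 (F3 (true,(ist a).2)).1).
  move=> [[b c] d].
  have E1 : forall e, (ist (e,c,d)).1.1 = (ist (b,c,d)).1.1 by move=> e; apply: indep1'.
  have E2 : forall e, (ist (b,e,d)).1.2 = (ist (b,c,d)).1.2 by move=> e; apply: indep2'.
  have E3 : forall e, (ist (b,c,e)).2 = (ist (b,c,d)).2 by move=> e; apply: indep3'.
  rewrite /xt /Xa /= !E1 !E2 !E3.
  split => [[H1 [H2 H3]]|[H1 H2 H3]]; last by [].
  by rewrite -H1 -H2 -H3.
exists a; split; first exact/K.
by move=> b /K /Hu.
Qed.

Lemma Sdet x a : Sg (dq R F1) (dq R F2) (dq R F3) w x a = (xt a == x)%:R.
Proof.
rewrite /Sg.
have E : forall i o, ((F1 (a.1.1,i.1.1) == (x.1.1,o.1.1)) && (F2 (a.1.2,i.1.2) == (x.1.2,o.1.2))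
   && (F3 (a.2,i.2) == (x.2,o.2)) && (i == w o)) =
   (o == hh a i) && ((Xa a i == x) && (i == w (hh a i))).
  move=> i [[o1 o2] o3]; case: x => [[x1 x2] x3].
  rewrite /hh /Xa /=.
  case: (F1 (a.1.1, i.1.1)) => y1 p1; case: (F2 (a.1.2, i.1.2)) => y2 p2.
  case: (F3 (a.2, i.2)) => y3 p3.
  apply/idP/idP.
    move=> /andP[/andP[/andP[/eqP[-> ->] /eqP[-> ->]] /eqP[-> ->]] Hi].
    by rewrite !eqxx Hi.
  move=> /andP[/eqP[-> -> ->] /andP[/eqP[-> -> ->] Hi]].
  by rewrite !eqxx Hi.
under eq_bigr => i _ do under eq_bigr => o _ do rewrite /dq -!natrM !mulnb E.
under eq_bigr => i _.
  rewrite (bigD1 (hh a i)) // eqxx big1 ?addr0 /=; last first.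
    by move=> o /negbTE ->.
  rewrite addr0; over.
rewrite (bigD1 (ist a)) //= istP eqxx andbT big1 ?addr0 //.
move=> i Hi; rewrite [i == _](_ : _ = false) ?andbF //.
apply/negbTE/eqP => /esym/ist_uniq H; by rewrite H eqxx in Hi.
Qed.

Lemma Tdet : Tg (dq R F1) (dq R F2) (dq R F3) w <= 5%:R.
Proof.
rewrite /Tg; under eq_bigr => a _ do rewrite !Sdet winR.
rewrite -natr_sum ler_nat big_bit3.
have -> : \sum_(a <- allb3) (winb a (xt a) : nat) = count (fun a => winb a (xt a)) allb3.
  by elim: allb3 => [|b s IH]; rewrite ?big_nil ?big_cons //= IH.
apply: comb_final => f1 f2 f3; exact: xtP.
Qed.
End Det.

Lemma prod2 (R : realType) (A B : finType) (f : A -> R) (g : B -> R) :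
  (\sum_a f a) * (\sum_b g b) = \sum_(p : A * B) f p.1 * g p.2.
Proof.
rewrite -(pair_bigA _ (fun a b => f a * g b)) mulr_suml; apply: eq_bigr => a _.
by rewrite mulr_sumr.
Qed.

Lemma prod3 (R : realType) (A B C : finType) (f : A -> R) (g : B -> R) (h : C -> R) :
  (\sum_a f a) * (\sum_b g b) * (\sum_c h c) =
  \sum_(F : A * B * C) f F.1.1 * g F.1.2 * h F.2.
Proof. by rewrite !prod2. Qed.

Lemma T_le5 (R : realType) (I1 I2 I3 O1 O2 O3 : finType)
  (q1 : bool -> I1 -> bool -> O1 -> R) (q2 : bool -> I2 -> bool -> O2 -> R)
  (q3 : bool -> I3 -> bool -> O3 -> R) (w : O1 * O2 * O3 -> I1 * I2 * I3) :
  local_intervention q1 -> local_intervention q2 -> local_intervention q3 ->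
  process_function w -> Tg q1 q2 q3 w <= 5%:R.
Proof.
move=> Hq1 Hq2 Hq3 Hw.
pose Pi (F : {ffun bool * I1 -> bool * O1} * {ffun bool * I2 -> bool * O2} *
             {ffun bool * I3 -> bool * O3}) := piw q1 F.1.1 * piw q2 F.1.2 * piw q3 F.2.
have E : forall x a, Sg q1 q2 q3 w x a =
   \sum_F Pi F * Sg (dq R F.1.1) (dq R F.1.2) (dq R F.2) w x a.
  move=> x a; rewrite /Sg.
  under eq_bigr => i _ do under eq_bigr => o _ do
    rewrite (decomp Hq1 a.1.1) (decomp Hq2 a.1.2) (decomp Hq3 a.2) prod3 mulr_suml.
  under eq_bigr => i _ do rewrite exchange_big.
  rewrite exchange_big; apply: eq_bigr => F _.
  rewrite mulr_sumr; apply: eq_bigr => i _.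
  rewrite mulr_sumr; apply: eq_bigr => o _.
  rewrite /Pi; ring.
have -> : Tg q1 q2 q3 w = \sum_F Pi F * Tg (dq R F.1.1) (dq R F.1.2) (dq R F.2) w.
  rewrite /Tg; under eq_bigr => a _ do rewrite !E -big_split.
  rewrite exchange_big; apply: eq_bigr => F _.
  rewrite mulr_sumr; apply: eq_bigr => a _; by rewrite mulrDr.
apply: (@le_trans _ _ (\sum_F Pi F * 5%:R)).
  apply: ler_sum => F _; apply: ler_wpM2l.
    by rewrite /Pi !mulr_ge0 // piw_ge0.
  exact: Tdet.
by rewrite -mulr_suml /Pi -prod3 (piw_sum Hq1) (piw_sum Hq2) (piw_sum Hq3) !mul1r.
Qed.

Lemma partA (R : realType) (p : bit3 -> bit3 -> R) :
  det_consistent p -> p_gynin p <= 5%:R / 8%:R.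
Proof.
case=> I1 [I2 [I3 [O1 [O2 [O3 [q1 [q2 [q3 [n [lam [w [[Hq1 [Hq2 Hq3]] [Hl0 Hl1] Hw Hp]]]]]]]]]]]].
have Ep : forall x a, p x a = \sum_(j < n) lam j * Sg q1 q2 q3 (w j) x a.
  move=> x a; rewrite Hp /Sg.
  under eq_bigr => i _ do under eq_bigr => o _ do rewrite mulr_sumr.
  under eq_bigr => i _ do rewrite exchange_big.
  rewrite exchange_big; apply: eq_bigr => j _.
  rewrite mulr_sumr; apply: eq_bigr => i _; rewrite mulr_sumr; apply: eq_bigr => o _.
  ring.
rewrite /p_gynin.
have -> : \sum_(a : bit3) (p (a.2, a.1.1, a.1.2) a + p (~~ a.2, ~~ a.1.1, ~~ a.1.2) a)
     = \sum_(j < n) lam j * Tg q1 q2 q3 (w j).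
  under eq_bigr => a _ do rewrite !Ep -big_split.
  rewrite exchange_big; apply: eq_bigr => j _; rewrite /Tg mulr_sumr.
  by apply: eq_bigr => a _; rewrite mulrDr.
rewrite mulrC; apply: ler_wpM2r; first by rewrite invr_ge0 ler0n.
apply: (@le_trans _ _ (\sum_(j < n) lam j * 5%:R)).
  apply: ler_sum => j _; apply: ler_wpM2l => //; exact: T_le5.
by rewrite -mulr_suml Hl1 mul1r.
Qed.

Definition lug (o : bit3) : bit3 := (~~ o.1.2 && o.2, ~~ o.2 && o.1.1, ~~ o.1.1 && o.1.2).
Definition Fsw : {ffun bool * bool -> bool * bool} := [ffun t => (t.2, t.1)].

Lemma FswE t : Fsw t = (t.2, t.1).
Proof. by rewrite /Fsw ffunE. Qed.

Lemma beq3P u v : reflect (u = v) (beq3 u v).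
Proof.
case: u v => [[u1 u2] u3] [[v1 v2] v3]; rewrite /beq3 /=.
by case: u1; case: v1; case: u2; case: v2; case: u3; case: v3; constructor.
Qed.

Lemma mem_allb3 (c : bit3) : c \in allb3.
Proof. by case: c => [[[] []] []]. Qed.

Lemma exU_bool (p : pred bit3) :
  has (fun i => p i && all (fun j => ~~ p j || beq3 j i) allb3) allb3 -> exists! i, p i.
Proof.
case/hasP => i _ /andP[Hi /allP H]; exists i; split => // j Hj.
by move: (H j (mem_allb3 j)); rewrite Hj /= => /beq3P.
Qed.

Lemma lugPF : process_function lug.
Proof.
move=> h1 h2 h3.
have E : forall i : bit3, (lug (h1 i.1.1, h2 i.1.2, h3 i.2) = i) <->
  (lug ((if i.1.1 then h1 true else h1 false), (if i.1.2 then h2 true else h2 false),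
        (if i.2 then h3 true else h3 false)) == i).
  by case=> [[[] []] []]; split => [->|/eqP].
suff [i [Hi Hu]] : exists! i : bit3, lug ((if i.1.1 then h1 true else h1 false),
   (if i.1.2 then h2 true else h2 false), (if i.2 then h3 true else h3 false)) == i.
  exists i; split; first exact/E.
  by move=> j /E /Hu.
apply: exU_bool.
by case: (h1 true); case: (h1 false); case: (h2 true); case: (h2 false);
   case: (h3 true); case: (h3 false); vm_compute.
Qed.

Lemma partB1 (R : realType) : det_consistent (p_det R gynin_strategy).
Proof.
have LI : local_intervention (dq R Fsw).
  split => [a i x o|a i]; first by rewrite /dq ler0n.
  rewrite pair_bigA (bigD1 (i,a)) // /dq.
  have -> : Fsw (a, i) = (i, a) by rewrite /Fsw ffunE.
  rewrite /= eqxx big1 /= ?addr0 //.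
  by move=> [y1 y2] Hy /=; rewrite eq_sym (negbTE Hy).
exists bool, bool, bool, bool, bool, bool, (dq R Fsw), (dq R Fsw), (dq R Fsw), 1%N,
  (fun _ => 1), (fun _ => lug).
split.
- by split; [exact: LI | split; exact: LI].
- by split; [move=> _; rewrite ler01 | rewrite big_ord1].
- by move=> _; apply: lugPF.
move=> x a.
under eq_bigr => i _ do under eq_bigr => o _ do rewrite big_ord1 mul1r.
have := Sdet R lugPF Fsw Fsw Fsw x a; rewrite /Sg => ->.
have Hi : ist lugPF Fsw Fsw Fsw a = lug a.
  by apply/esym/ist_uniq; rewrite /hh /Fsw !ffunE.
rewrite /p_det /xt Hi /Xa /Fsw !ffunE /= eq_sym.
by clear Hi; case: a => [[a1 a2] a3].
Qed.

Lemma partB2 (R : realType) : p_gynin (p_det R gynin_strategy) = 5%:R / 8%:R.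
Proof.
rewrite /p_gynin /p_det mulrC.
under eq_bigr => a _ do rewrite (eq_sym _ (gynin_strategy a)) (eq_sym _ (gynin_strategy a)) winR.
by rewrite -natr_sum big_bit3 !big_cons big_nil.
Qed.


Unset Implicit Arguments.

Theorem mainTheorem9 (R : realType) :
  (forall p : bit3 -> bit3 -> R, det_consistent p -> p_gynin p <= 5%:R / 8%:R) /\
  det_consistent (p_det R gynin_strategy) /\
  p_gynin (p_det R gynin_strategy) = 5%:R / 8%:R.
Proof.
split; first by move=> p; apply: partA.
split; [exact: partB1 | exact: partB2].
Qed.
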